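(* Bilocal Classical Theory (BCT) is a digitizable theory. (In fact every nontrivial system of BCT can serve as obit.)
   Context: BCT is an operational probabilistic theory with the following structure. Systems: a trivial system and, for every integer $D>1$, exactly one system of size $D$. For a nontrivial system $\mathrm A$ of size $D_{\mathrm A}$, every state is a nonnegative combination of the $D_{\mathrm A}$ pure states $|i)_{\mathrm A}$, the vertices of the simplex of deterministic states. For nontrivial $\mathrm A,\mathrm B$, the composite $\mathrm{AB}$ has size $2D_{\mathrm A}D_{\mathrm B}$ with pure states $|(ij)_s)_{\mathrm{AB}}$, $s\in\{+,-\}$, $|i)\boxtimes|j)=\tfrac12\sum_s|(ij)_s)$, and $((ij)_{s_1}k)_{s_2}=(i(jk)_{s_1s_2})_{s_1}$. Transformations act linearly, and identity transformations are denoted $\mathcal I$. Channels $\mathcal C\in\mathsf{Tr}_1(\mathrm E\to\mathrm F)$ between nontrivial systems are exactly those for which, for each $j\in\{1,\dots,D_{\mathrm E}\}$, there is a probability distribution $\{\lambda^{(j)}_{m\tau}\}$ over $(m,\tau)\in\{1,\dots,D_{\mathrm F}\}\times\{\pm\}$ with $(\mathcal I_{\mathrm A}\boxtimes\mathcal C)|(ij)_s)_{\mathrm{AE}}=\sum_{m,\tau}\lambda^{(j)}_{m\tau}|(im)_{\tau s})_{\mathrm{AF}}$ for every system $\mathrm A$ (signs multiply as $\pm1$). $\mathrm X^{\boxtimes k}$ denotes the composite of $k$ copies of $\mathrm X$. Two systems $\mathrm A_1,\mathrm A_2$ are asymptotically equivalent if: (1) there are integers $k_1,k_2<\infty$ and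 channels $\mathcal E\in\mathsf{Tr}_1(\mathrm A_1^{\boxtimes k_1}\to\mathrm A_2^{\boxtimes k_2})$, $\mathcal D\in\mathsf{Tr}_1(\mathrm A_2^{\boxtimes k_2}\to\mathrm A_1^{\boxtimes k_1})$ with $\mathcal D\mathcal E=\mathcal I_{\mathrm A_1^{\boxtimes k_1}}$; (2) symmetrically there are $h_1,h_2$ and channels $\mathcal G\in\mathsf{Tr}_1(\mathrm A_2^{\boxtimes h_2}\to\mathrm A_1^{\boxtimes h_1})$, $\mathcal F\in\mathsf{Tr}_1(\mathrm A_1^{\boxtimes h_1}\to\mathrm A_2^{\boxtimes h_2})$ with $\mathcal F\mathcal G=\mathcal I_{\mathrm A_2^{\boxtimes h_2}}$; (3) letting $M_2^{\min}(k_1)$ be the smallest $k_2$ for which (1) holds given $k_1$, and $M_1^{\min}(h_2)$ the smallest $h_1$ for which (2) holds given $h_2$, there is $k$ with $\lim_{k_1\to\infty}M_2^{\min}(k_1)/k_1=k$ and $\lim_{h_2\to\infty}M_1^{\min}(h_2)/h_2=k^{-1}$. A theory is digitizable if there exists a system $\mathrm B$ (an obit) such that for every system $\mathrm X$ there are $k<\infty$ and channels $\mathcal C\in\mathsf{Tr}_1(\mathrm X\to\mathrm B^{\boxtimes k})$, $\mathcal F\in\mathsf{Tr}_1(\mathrm B^{\boxtimes k}\to\mathrm X)$ with $\mathcal F\mathcal C=\mathcal I_{\mathrm X}$, and moreover any two systems with this property are asymptotically equivalent. *)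

(* Defs.v *)
From HB Require Import structures.
From mathcomp Require Import all_boot all_order all_algebra.
From mathcomp Require Import reals.
Set Implicit Arguments. Unset Strict Implicit. Unset Printing Implicit Defensive.
Import Order.TTheory GRing.Theory Num.Theory.
Local Open Scope ring_scope.

(* A nontrivial system is determined by its size D > 1 (exactly one system
   per size); its pure states are labelled by 'I_D. *)
Record ntsys := NT { dim : nat; dim_gt1 : (1 < dim)%N }.

Inductive sys := Triv | NTriv of ntsys.

Lemma comp_dim_gt1 (a b : ntsys) : (1 < 2 * dim a * dim b)%N.
Proof.
case: a b => a Ha [b Hb] /=.
rewrite -mulnA; have Hab : (0 < a * b)%N by rewrite muln_gt0 (ltnW Ha) (ltnW Hb).
by rewrite mul2n -addnn -addn1 leq_add.
Qed.

Definition scomp (X Y : sys) : sys :=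
  match X, Y with
  | Triv, _ => Y
  | _, Triv => X
  | NTriv a, NTriv b => NTriv (NT (comp_dim_gt1 a b))
  end.

Fixpoint spow (X : sys) (k : nat) : sys :=
  match k with 0 => Triv | k'.+1 => scomp (spow X k') X end.

Section BCT.
Variable R : realType.

(* A table lam j m tau  =  lambda^{(j)}_{m tau}; the sign + is encoded as
   false, - as true, so that sign multiplication is addb (xor). *)
Definition table (DE DF : nat) := 'I_DE -> 'I_DF -> bool -> R.

Definition is_channel_table DE DF (lam : table DE DF) : Prop :=
  (forall j m t, 0 <= lam j m t) /\
  (forall j, \sum_(m < DF) \sum_(t : bool) lam j m t = 1).

(* Vectors in the linear span of the pure states |(ij)_s) of the composite AE
   (A of size DA, E of size DE). *)
Definition cvec (DA DE : nat) := 'I_DA -> 'I_DE -> bool -> R.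

Definition pure DA DE (i : 'I_DA) (j : 'I_DE) (s : bool) : cvec DA DE :=
  fun i' j' s' => ((i' == i) && (j' == j) && (s' == s))%:R.

(* Linear action of I_A ⊠ C, where C has table lam:
   (I_A ⊠ C) |(ij)_s) = \sum_{m,tau} lam^{(j)}_{m tau} |(im)_{tau s}). *)
Definition act DA DE DF (lam : table DE DF) (v : cvec DA DE) : cvec DA DF :=
  fun i m t => \sum_(j < DE) \sum_(s : bool) v i j s * lam j m (addb t s).

(* D ∘ E = I_E : equality of transformations, tested on all pure states of
   every composite A E with A nontrivial. *)
Definition comp_is_id DE DF (lC : table DE DF) (lF : table DF DE) : Prop :=
  forall DA : nat, (1 < DA)%N ->
  forall (i : 'I_DA) (j : 'I_DE) (s : bool) i' j' s',
    act lF (act lC (pure i j s)) i' j' s' = pure i j s i' j' s'.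

(* ---------- "X encodes into Y": exist C in Tr_1(X -> Y), F in Tr_1(Y -> X)
   with F C = I_X. ---------- *)
Definition is_state (D : nat) (p : 'I_D -> R) : Prop :=
  (forall m, 0 <= p m) /\ \sum_(m < D) p m = 1.

Definition encodes (X Y : sys) : Prop :=
  match X, Y with
  | Triv, Triv => True  (* C = F = identity of the trivial system *)
  | Triv, NTriv f =>
      (* C = a deterministic state p of Y, F = the deterministic effect u;
         F C = u(p) = \sum_m p m must equal 1 = I_Triv *)
      exists p : 'I_(dim f) -> R, is_state p /\ \sum_(m < dim f) p m = 1
  | NTriv e, Triv =>
      (* C = deterministic effect, F = a deterministic state p; F C maps every
         pure state |j) of X to p, so it must equal |j) for every j *)
      exists p : 'I_(dim e) -> R, is_state p /\
        forall j m : 'I_(dim e), p m = (m == j)%:R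
  | NTriv e, NTriv f =>
      exists (lC : table (dim e) (dim f)) (lF : table (dim f) (dim e)),
        is_channel_table lC /\ is_channel_table lF /\ comp_is_id lC lF
  end.

Definition is_min_pos (P : nat -> Prop) (m : nat) : Prop :=
  (1 <= m)%N /\ P m /\ forall m', (1 <= m')%N -> (m' < m)%N -> ~ P m'.

Definition min_ratio_limit (P : nat -> nat -> Prop) (c : R) : Prop :=
  forall eps : R, 0 < eps -> exists N : nat, forall n : nat, (N <= n)%N ->
    exists m : nat, is_min_pos (P n) m /\ `| m%:R / n%:R - c | < eps.

Definition asymp_equiv (A1 A2 : sys) : Prop :=
  (exists k1 k2 : nat, [/\ (1 <= k1)%N, (1 <= k2)%N &
        encodes (spow A1 k1) (spow A2 k2)]) /\
  (exists h1 h2 : nat, [/\ (1 <= h1)%N, (1 <= h2)%N &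
        encodes (spow A2 h2) (spow A1 h1)]) /\
  (exists k : R, k != 0 /\
     min_ratio_limit (fun k1 k2 => encodes (spow A1 k1) (spow A2 k2)) k /\
     min_ratio_limit (fun h2 h1 => encodes (spow A2 h2) (spow A1 h1)) k^-1).

Definition obit (B : sys) : Prop :=
  forall X : sys, exists k : nat, (1 <= k)%N /\ encodes X (spow B k).

Definition digitizable : Prop :=
  exists B : sys, obit B /\
    forall B1 B2 : sys, obit B1 -> obit B2 -> asymp_equiv B1 B2.

End BCT.

(* Main.v *)
Require Import Defs.
From HB Require Import structures.
From mathcomp Require Import all_boot all_order all_algebra.
From mathcomp Require Import reals.
From mathcomp Require Import exp ring lra zify.
Require Import Defs.
Set Implicit Arguments. Unset Strict Implicit. Unset Printing Implicit Defensive.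
Import Order.TTheory GRing.Theory Num.Theory.
Local Open Scope ring_scope.
Section Aux.
Variable R : realType.

Lemma sum_delta n (x : 'I_n) (F : 'I_n -> R) :
  \sum_(m < n) (m == x)%:R * F m = F x.
Proof.
rewrite (bigD1 x) //= eqxx mul1r big1 ?addr0 // => m /= /negbTE ->.
by rewrite mul0r.
Qed.

Lemma sum_deltab (x : bool) (F : bool -> R) :
  \sum_(m : bool) (m == x)%:R * F m = F x.
Proof. by rewrite big_bool; case: x => /=; rewrite mul1r mul0r ?addr0 ?add0r. Qed.

Lemma act_pure DA DE DF (lam : table R DE DF) (i : 'I_DA) j s i' m t :
  act lam (pure R i j s) i' m t = (i' == i)%:R * lam j m (addb t s).
Proof.
rewrite /act (bigD1 j) //= [X in _ + X]big1 ?addr0; last first.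
  move=> j' /= /negbTE nj; apply: big1 => s' _.
  by rewrite /pure nj andbF mul0r.
rewrite big_bool /pure !eqxx !andbT /=.
by case: (i' == i); case: s; rewrite /= ?mul1r ?mul0r ?addr0 ?add0r.
Qed.

Lemma act2 DA DE DF (lC : table R DE DF) (lF : table R DF DE) (i : 'I_DA) j s i' j' s' :
  act lF (act lC (pure R i j s)) i' j' s' =
  (i' == i)%:R * \sum_(m < DF) \sum_(t : bool) lC j m (addb t s) * lF m j' (addb s' t).
Proof.
rewrite /act mulr_sumr; apply: eq_bigr => m _; rewrite mulr_sumr; apply: eq_bigr => t _.
by rewrite -/(act lC (pure R i j s) i' m t) act_pure mulrA.
Qed.

Lemma enc_suff De Df (f : 'I_De -> 'I_Df) (g : 'I_Df -> 'I_De) :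
  cancel f g ->
  exists (lC : table R De Df) (lF : table R Df De),
        is_channel_table lC /\ is_channel_table lF /\ comp_is_id lC lF.
Proof.
move=> fK.
exists (fun j m u => ((m == f j) && ~~ u)%:R).
exists (fun m j u => ((j == g m) && ~~ u)%:R).
split; [|split].
- split; first by move=> *; apply: ler0n.
  move=> j; rewrite (bigD1 (f j)) //= [X in _ + X]big1 ?addr0.
    by rewrite big_bool eqxx /= add0r.
  by move=> m /= /negbTE nm; apply: big1 => t _; rewrite nm.
- split; first by move=> *; apply: ler0n.
  move=> m; rewrite (bigD1 (g m)) //= [X in _ + X]big1 ?addr0.
    by by rewrite big_bool eqxx /= add0r.
  by move=> j /= /negbTE nj; apply: big1 => t _; rewrite nj.
- move=> DA _ i j s i' j' s'; rewrite act2.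
  rewrite (bigD1 (f j)) //= [X in _ + X]big1 ?addr0; last first.
    by move=> m /= /negbTE nm; apply: big1 => t _; rewrite nm mul0r.
  rewrite eqxx /= fK.
  rewrite /pure; case: (i' == i); rewrite ?mul0r ?mul1r //.
  case: (j' == j); case: s; case: s';
  by rewrite big_bool /= ?mul0r ?mul1r ?addr0 ?add0r.
Qed.

Lemma le_sum_bool (F : bool -> R) t : (forall u, 0 <= F u) -> F t <= \sum_(u : bool) F u.
Proof. move=> H; rewrite big_bool; have := H true; have := H false; case: t => /= ? ?; lra. Qed.

Lemma enc_nec De Df (lC : table R De Df) (lF : table R Df De) :
  is_channel_table lC -> is_channel_table lF -> comp_is_id lC lF -> (De <= Df)%N.
Proof.
move=> [C0 C1] [F0 F1] Hid.
have Fle1 : forall m j t, lF m j t <= 1.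
  move=> m j t; rewrite -(F1 m) (bigD1 j) //=.
  have := le_sum_bool t (F0 m j).
  have : 0 <= \sum_(i < De | i != j) \sum_(t0 : bool) lF m i t0.
    by apply: sumr_ge0 => i _; apply: sumr_ge0.
  lra.
have key : forall j m t, lC j m t != 0 -> lF m j t = 1.
  move=> j m t nz.
  have H := Hid 2%N isT ord0 j false ord0 j false.
  rewrite act2 /pure !eqxx /= mul1r in H.
  have H2 : \sum_(m < Df) \sum_(t : bool) lC j m t * (1 - lF m j t) = 0.
    transitivity (\sum_(m < Df) \sum_(t : bool) lC j m t -
       \sum_(m < Df) \sum_(t : bool) lC j m (addb t false) * lF m j (addb false t));
      last by rewrite C1 H subrr.
    rewrite -sumrB; apply: eq_bigr => m' _.
    rewrite -sumrB; apply: eq_bigr => t' _; rewrite addbF /=.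
    by rewrite mulrBr mulr1.
  have nn : forall m' t', 0 <= lC j m' t' * (1 - lF m' j t').
    by move=> m' t'; apply: mulr_ge0 => //; rewrite subr_ge0.
  have H4 := psumr_eq0P (fun m' _ => sumr_ge0 _ (fun t' _ => nn m' t')) H2 (i:=m) isT.
  have : lC j m t * (1 - lF m j t) = 0.
    exact: (psumr_eq0P (fun t' _ => nn m t') H4 (i:=t) isT).
  move/eqP; rewrite mulf_eq0 (negbTE nz) /= subr_eq0 => /eqP <-. done.
have ex : forall j, exists mt : 'I_Df * bool, lC j mt.1 mt.2 != 0.
  move=> j; apply/existsP; apply: contraT => /existsPn H.
  have : \sum_(m < Df) \sum_(t : bool) lC j m t = 0.
    apply: big1 => m _; apply: big1 => t _.
    by have := H (m, t); rewrite negbK => /eqP.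
  by rewrite C1 => /eqP; rewrite oner_eq0.
pose h j := (xchoose (ex j)).1.
have hP : forall j, lF (h j) j (xchoose (ex j)).2 = 1.
  by move=> j; apply: key; apply: (xchooseP (ex j)).
have hinj : injective h.
  move=> j1 j2 E; apply/eqP; apply/negP => /negP nj.
  have := F1 (h j1).
  rewrite (bigD1 j1) //= (bigD1 j2) /=; last by rewrite eq_sym.
  have := le_sum_bool (xchoose (ex j1)).2 (F0 (h j1) j1).
  have := le_sum_bool (xchoose (ex j2)).2 (F0 (h j1) j2).
  rewrite hP E hP.
  have : 0 <= \sum_(i < De | (i != j1) && (i != j2)) \sum_(t0 : bool) lF (h j2) i t0.
    by apply: sumr_ge0 => i _; apply: sumr_ge0.
  lra.
by have := leq_card _ hinj; rewrite !card_ord.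
Qed.

End Aux.
Lemma spow_dim (B : ntsys) n : exists e, spow (NTriv B) n.+1 = NTriv e /\
   (2 * dim e = (2 * dim B)^n.+1)%N.
Proof.
elim: n => [|n [e [He De]]]; first by exists B; rewrite expn1.
exists (NT (comp_dim_gt1 e B)); rewrite /= -/(spow (NTriv B) n.+1) He; split=> //=.
by rewrite expnS -De; lia.
Qed.

Lemma enc_nt (R : realType) e f : encodes R (NTriv e) (NTriv f) <-> (dim e <= dim f)%N.
Proof.
split; first by case=> lC [lF [h1 [h2 h3]]]; exact: enc_nec h1 h2 h3.
move=> H.
pose j0 : 'I_(dim e) := Ordinal (ltnW (dim_gt1 e)).
have fK : cancel (widen_ord H) (fun m : 'I_(dim f) => insubd j0 (val m)).
  by move=> j; apply: val_inj; rewrite val_insubd /= ltn_ord.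
exact: enc_suff fK.
Qed.

Lemma enc_pow (R : realType) A B n m :
  encodes R (spow (NTriv A) n.+1) (spow (NTriv B) m.+1) <->
  ((2 * dim A)^n.+1 <= (2 * dim B)^m.+1)%N.
Proof.
have [e [-> De]] := spow_dim A n; have [f [-> Df]] := spow_dim B m.
by rewrite enc_nt -De -Df leq_pmul2l.
Qed.

Lemma nat_ln (R : realType) (x y n m : nat) : (1 < x)%N -> (1 < y)%N ->
  (x ^ n <= y ^ m)%N = (n%:R * ln (x%:R : R) <= m%:R * ln (y%:R : R)).
Proof.
move=> hx hy.
have px : (0 : R) < x%:R by rewrite ltr0n ltnW.
have py : (0 : R) < y%:R by rewrite ltr0n ltnW.
rewrite -(ler_nat R) !natrX !mulr_natl -!lnXn //.
by rewrite ler_ln ?posrE ?exprn_gt0.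
Qed.

Lemma ratio_lim (R : realType) (P : nat -> nat -> Prop) (c : R) : 0 < c ->
  (forall n m, (1 <= n)%N -> (1 <= m)%N -> P n m <-> n%:R * c <= m%:R) ->
  min_ratio_limit P c.
Proof.
move=> c0 HP eps eps0.
exists (Num.truncn (eps^-1)).+1 => n Nn.
have n1 : (1 <= n)%N by apply: leq_trans Nn.
pose Q m := (1 <= m)%N && (n%:R * c <= m%:R).
have exQ : exists m, Q m.
  exists (Num.truncn (n%:R * c)).+1; rewrite /Q /=.
  exact: ltW (truncnS_gt _).
case: (ex_minnP exQ) => m /andP[m1 Hm] Hmin.
exists m; split.
  split=> //; split; first by apply/HP.
  move=> m' m'1 lt /(HP _ _ n1 m'1) H.
  have := Hmin m'; rewrite /Q m'1 H => /(_ isT).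
  by rewrite leqNgt lt.
have ncpos : 0 < n%:R * c by rewrite mulr_gt0 // ltr0n.
have lt1 : m%:R - 1 < n%:R * c.
  case: m m1 Hm Hmin => // m _ Hm Hmin.
  case: m Hm Hmin => [|m] Hm Hmin; first by rewrite subrr.
  rewrite -natr1 addrK ltNge; apply/negP => H.
  by have := Hmin m.+1; rewrite /Q H /= => /(_ isT); rewrite ltnn.
have n0 : (0 : R) < n%:R by rewrite ltr0n.
have E : m%:R / n%:R - c = (m%:R - n%:R * c) / n%:R.
  by field; rewrite gt_eqF.
rewrite E ger0_norm; last by apply: divr_ge0 => //; rewrite subr_ge0.
rewrite ltr_pdivrMr //.
have h1 : 1 < eps * (Num.truncn (eps^-1)).+1%:R.
  by rewrite -ltr_pdivrMl // mulr1 truncnS_gt.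
have h2 : eps * (Num.truncn (eps^-1)).+1%:R <= eps * n%:R.
  by rewrite ler_pM2l // ler_nat.
lra.
Qed.

Lemma obit_nt (R : realType) (B : ntsys) : obit R (NTriv B).
Proof.
case=> [|e].
  exists 1%N; split=> //=.
  pose j0 : 'I_(dim B) := Ordinal (ltnW (dim_gt1 B)).
  have S : \sum_(m < dim B) (m == j0)%:R = 1 :> R.
    by rewrite (bigD1 j0) //= [X in _ + X]big1 ?addr0 // => m /= /negbTE ->.
  exists (fun m => (m == j0)%:R); split=> //; split=> // m; exact: ler0n.
exists (dim e).+1; split=> //.
have [f [-> Df]] := spow_dim B (dim e).
apply/enc_nt; rewrite -(leq_pmul2l (isT : (0 < 2)%N)) Df expnS.
have hB : (1 < 2 * dim B)%N by have := dim_gt1 B; lia.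
have := ltn_expl (dim e) hB => hlt.
apply: leq_mul; first by have := dim_gt1 B; lia.
exact: ltnW.
Qed.

Lemma spow_triv k : spow Triv k = Triv.
Proof. by elim: k => //= k ->. Qed.

Lemma not_obit_triv (R : realType) : ~ obit R Triv.
Proof.
move=> /(_ (NTriv (@NT 2 isT))) [k [_]]; rewrite spow_triv => -[p [_ Hp]].
have := Hp ord0 ord0; have := Hp (@Ordinal 2 1 isT) ord0 => -> /eqP.
by rewrite eq_sym oner_eq0.
Qed.

Lemma asymp_nt (R : realType) A B : asymp_equiv R (NTriv A) (NTriv B).
Proof.
have ha : (1 < 2 * dim A)%N by have := dim_gt1 A; lia.
have hb : (1 < 2 * dim B)%N by have := dim_gt1 B; lia.
pose La := ln ((2 * dim A)%:R : R).
pose Lb := ln ((2 * dim B)%:R : R).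
have La0 : 0 < La by apply: ln_gt0; rewrite ltr1n.
have Lb0 : 0 < Lb by apply: ln_gt0; rewrite ltr1n.
have L1 : min_ratio_limit
   (fun k1 k2 => encodes R (spow (NTriv A) k1) (spow (NTriv B) k2)) (La / Lb).
  apply: ratio_lim; first exact: divr_gt0.
  move=> [|n] [|m] // _ _; rewrite enc_pow (nat_ln R) //.
  rewrite mulrA ler_pdivrMr //; exact: iff_refl.
have L2 : min_ratio_limit
   (fun k1 k2 => encodes R (spow (NTriv B) k1) (spow (NTriv A) k2)) (Lb / La).
  apply: ratio_lim; first exact: divr_gt0.
  move=> [|n] [|m] // _ _; rewrite enc_pow (nat_ln R) //.
  rewrite mulrA ler_pdivrMr //; exact: iff_refl.
split; [|split].
- have [N HN] := L1 1 ltr01.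
  have [m [[m1 [Pm _]] _]] := HN N.+1 (leqnSn N).
  by exists N.+1, m.
- have [N HN] := L2 1 ltr01.
  have [m [[m1 [Pm _]] _]] := HN N.+1 (leqnSn N).
  by exists m, N.+1.
- exists (La / Lb); split; first by rewrite mulf_neq0 ?invr_eq0 ?gt_eqF.
  by split=> //; rewrite invf_div.
Qed.

Theorem lemma2 (R : realType) :
  digitizable R /\ forall B : ntsys, obit R (NTriv B).
Proof.
split; last exact: obit_nt.
exists (NTriv (@NT 2 isT)); split; first exact: obit_nt.
move=> [|B1] [|B2] h1 h2.
- by case: (not_obit_triv h1).
- by case: (not_obit_triv h1).
- by case: (not_obit_triv h2).
- exact: asymp_nt.
Qed.
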